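(* Let the type set be a disjoint union $\{1,\dots,V\}=\bigcup_\alpha V_\alpha$ of isomer classes, with internal energies $I_v$, parameters $\nu_v>0$ constant on each class $V_\alpha$, and $\beta>0$. Let $p_v>0$ and assume: (i) binary reaction base rates $b_{\hat\imath\hat\jmath}$, $\hat\imath=(v,w)$, $\hat\jmath=(v',w')$, satisfy $p_vp_wb_{\hat\imath\hat\jmath}=p_{v'}p_{w'}b_{\hat\jmath\hat\imath}$; (ii) unary reaction base rates $b_{vw}$, allowed only for $v,w$ in the same class, satisfy $p_vb_{vw}=p_wb_{wv}$; (iii) for every binary reaction $v,w\to v',w'$, $\nu_v+\nu_w=\nu_{v'}+\nu_{w'}$. With $f_v$, $f_{\hat\imath}$, $a_{vw}(U)$, $a_{\hat\imath\hat\jmath}(U)$ as in the context, set $$\pi_v=p_ve^{-\beta I_v}\beta^{-\nu_v}.$$ Then for every binary reaction $\hat\imath\to\hat\jmath$ and all $U>\max(I_{\hat\imath},I_{\hat\jmath})$, $$\pi_v\pi_wf_{\hat\imath}(U)a_{\hat\imath\hat\jmath}(U)=\pi_{v'}\pi_{w'}f_{\hat\jmath}(U)a_{\hat\jmath\hat\imath}(U),$$ and for every unary reaction $v\to w$ within a class and all $U>\max(I_v,I_w)$, $$\pi_vf_v(U)a_{vw}(U)=\pi_wf_w(U)a_{wv}(U).$$ That is, the factorized distribution with type weights $\pi_v$ and type-$v$ full-energy densities $f_v$ is a reversible invariant distribution for both binary and unary reactions.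
   Context: For a type $v$, $f_v$ is the shifted Gamma density $f_v(U)=\frac{\beta^{\nu_v}}{\Gamma(\nu_v)}(U-I_v)^{\nu_v-1}e^{-\beta(U-I_v)}$ for $U>I_v$ and $0$ otherwise ($U$ = full energy = internal plus kinetic). For a pair $\hat\imath=(v,w)$, $I_{\hat\imath}=I_v+I_w$, $\nu_{\hat\imath}=\nu_v+\nu_w$, and $f_{\hat\imath}=f_v*f_w$ (convolution), the density of the pair's total full energy. Unary rates: $a_{vw}(U)=(U-I_w)^{\nu_w-1}b_{vw}$ if $U\ge I_w$, $0$ otherwise, where $U$ is the full energy of the molecule, which is conserved in the reaction. Binary rates: $a_{\hat\imath\hat\jmath}(U)=(U-I_{\hat\jmath})^{\nu_{\hat\jmath}-1}b_{\hat\imath\hat\jmath}$ if $U\ge I_{\hat\jmath}$, $0$ otherwise, where $U$ is the total full energy of the reacting pair, which is conserved in the reaction. *)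

(* Defs.v *)
From Stdlib Require Import Reals Lra ClassicalEpsilon.
Open Scope R_scope.

Definition improper_int (g : R -> R) (lo hi l : R) : Prop :=
  forall eps, 0 < eps -> exists delta, 0 < delta /\
    forall a b, lo < a < lo + delta -> hi - delta < b < hi ->
      exists pr : Riemann_integrable g a b, Rabs (RiemannInt pr - l) < eps.

Definition improper_int_inf (g : R -> R) (lo l : R) : Prop :=
  forall eps, 0 < eps -> exists delta, 0 < delta /\ exists M,
    forall a b, lo < a < lo + delta -> M < b ->
      exists pr : Riemann_integrable g a b, Rabs (RiemannInt pr - l) < eps.

Definition Rint_open (g : R -> R) (lo hi : R) : R :=
  epsilon (inhabits 0) (improper_int g lo hi).

Definition Gamma_fn (nu : R) : R :=
  epsilon (inhabits 0)
    (improper_int_inf (fun t => Rpower t (nu - 1) * exp (- t)) 0).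

Definition gamma_dens (beta nu I0 U : R) : R :=
  if Rlt_dec I0 U then
    Rpower beta nu / Gamma_fn nu * Rpower (U - I0) (nu - 1) * exp (- beta * (U - I0))
  else 0.

Section Model.
Context {T : Type} (beta : R) (I nu : T -> R).

Definition f_type (v : T) (U : R) : R := gamma_dens beta (nu v) (I v) U.

Definition I_pair (i : T * T) : R := I (fst i) + I (snd i).
Definition nu_pair (i : T * T) : R := nu (fst i) + nu (snd i).

(* f_ihat = f_v * f_w (convolution).  The integrand t |-> f_v(t) f_w(U-t)
   vanishes outside (I_v, U - I_w), so the convolution is the (improper, as
   the integrand may be unbounded at the endpoints when nu < 1) integral over
   that interval, and 0 when U <= I_v + I_w. *)
Definition f_pair (i : T * T) (U : R) : R :=
  if Rlt_dec (I_pair i) U then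
    Rint_open (fun t => f_type (fst i) t * f_type (snd i) (U - t))
              (I (fst i)) (U - I (snd i))
  else 0.

Definition a_un (b : T -> T -> R) (v w : T) (U : R) : R :=
  if Rle_dec (I w) U then Rpower (U - I w) (nu w - 1) * b v w else 0.

Definition a_bin (b : T * T -> T * T -> R) (i j : T * T) (U : R) : R :=
  if Rle_dec (I_pair j) U then Rpower (U - I_pair j) (nu_pair j - 1) * b i j else 0.

End Model.

Definition pi_w {T : Type} (beta : R) (I nu p : T -> R) (v : T) : R :=
  p v * exp (- beta * I v) * Rpower beta (- nu v).

(* Main.v *)
Require Import Defs.
From Stdlib Require Import Reals.
From Stdlib Require Fin.
From Stdlib Require Import Lra Lia ZArith ClassicalEpsilon Classical.
From Coquelicot Require Import Coquelicot.
Open Scope R_scope.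


Lemma RInt_lin (g h : R -> R) a b c d : ex_RInt g a b -> ex_RInt h a b ->
  RInt (fun x => c * g x + d * h x) a b = c * RInt g a b + d * RInt h a b.
Proof.
  intros Hg Hh.
  assert (E1 := RInt_plus (V:=R_CompleteNormedModule) (fun x => scal c (g x)) (fun x => scal d (h x)) a b
     (ex_RInt_scal _ _ _ _ Hg) (ex_RInt_scal _ _ _ _ Hh)).
  assert (E2 := RInt_scal (V:=R_CompleteNormedModule) g a b c Hg).
  assert (E3 := RInt_scal (V:=R_CompleteNormedModule) h a b d Hh).
  unfold scal, plus in *; simpl in *. unfold mult in *; simpl in *.
  rewrite E1, E2, E3. reflexivity.
Qed.

Lemma Chasles (g : R -> R) a b c : ex_RInt g a b -> ex_RInt g b c ->
  RInt g a c = RInt g a b + RInt g b c.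
Proof. intros. rewrite <- (RInt_Chasles (V:=R_CompleteNormedModule) g a b c); auto. Qed.

Definition ins (lo : R) (hi : Rbar) (x : R) := lo < x /\ Rbar_lt x hi.
Definition Cnt (g : R -> R) lo hi := forall x, ins lo hi x -> continuous g x.
Definition Lim (g : R -> R) lo hi l := forall eps, 0 < eps -> exists a0 b0,
  ins lo hi a0 /\ ins lo hi b0 /\ a0 <= b0 /\
  forall a b, lo < a <= a0 -> b0 <= b -> Rbar_lt b hi -> Rabs (RInt g a b - l) < eps.

Lemma Rbar_lt_le_trans x y (hi : Rbar) : x <= y -> Rbar_lt y hi -> Rbar_lt x hi.
Proof. destruct hi; simpl; intros; auto; lra. Qed.

Lemma ins_mid lo hi a b x : ins lo hi a -> ins lo hi b -> a <= x <= b -> ins lo hi x.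
Proof.
  intros [Ha1 Ha2] [Hb1 Hb2] Hx. split. lra.
  apply Rbar_lt_le_trans with b; auto; lra.
Qed.

Lemma Cnt_ex g lo hi a b : Cnt g lo hi -> ins lo hi a -> ins lo hi b -> ex_RInt g a b.
Proof.
  intros Hc Ha Hb. apply (ex_RInt_continuous (V:=R_CompleteNormedModule)). intros z Hz. apply Hc.
  unfold Rmin, Rmax in Hz. destruct (Rle_dec a b).
  apply ins_mid with a b; auto. apply ins_mid with b a; auto; lra.
Qed.

Definition Pos (g : R -> R) lo hi := forall x, ins lo hi x -> 0 <= g x.

Lemma RInt_mono g lo hi a' a b b' : Cnt g lo hi -> Pos g lo hi ->
  ins lo hi a' -> ins lo hi b' -> a' <= a -> a <= b -> b <= b' ->
  RInt g a b <= RInt g a' b'.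
Proof.
  intros Hc Hp Ha' Hb' H1 H2 H3.
  assert (Ha : ins lo hi a) by (apply ins_mid with a' b'; auto; lra).
  assert (Hb : ins lo hi b) by (apply ins_mid with a' b'; auto; lra).
  rewrite (Chasles g a' a b'), (Chasles g a b b');
    try (apply Cnt_ex with lo hi; auto).
  assert (0 <= RInt g a' a).
  { apply RInt_ge_0; auto. apply Cnt_ex with lo hi; auto.
    intros; apply Hp; apply ins_mid with a' b'; auto; lra. }
  assert (0 <= RInt g b b').
  { apply RInt_ge_0; auto. apply Cnt_ex with lo hi; auto.
    intros; apply Hp; apply ins_mid with a' b'; auto; lra. }
  lra.
Qed.

Lemma Lim_ge g lo hi l a b : Cnt g lo hi -> Pos g lo hi -> Lim g lo hi l ->
  ins lo hi a -> ins lo hi b -> a <= b -> RInt g a b <= l.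
Proof.
  intros Hc Hp Hl Ha Hb Hab.
  destruct (Rle_dec (RInt g a b) l) as [|Hn]; auto. exfalso.
  destruct (Hl (RInt g a b - l)) as [a0 [b0 [Ha0 [Hb0 [Hab0 H]]]]]. lra.
  assert (Hm : RInt g a b <= RInt g (Rmin a a0) (Rmax b b0)).
  { apply RInt_mono with lo hi; auto.
    unfold Rmin; destruct (Rle_dec a a0); auto.
    unfold Rmax; destruct (Rle_dec b b0); auto.
    apply Rmin_l. apply Rmax_l. }
  specialize (H (Rmin a a0) (Rmax b b0)).
  assert (Rabs (RInt g (Rmin a a0) (Rmax b b0) - l) < RInt g a b - l).
  { apply H. split. destruct Ha, Ha0. unfold Rmin; destruct (Rle_dec a a0); lra.
    apply Rmin_r. apply Rmax_r.
    unfold Rmax; destruct (Rle_dec b b0). apply Hb0. apply Hb. }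
  apply Rabs_def2 in H0. lra.
Qed.

Lemma Lim_le g lo hi l K : Lim g lo hi l ->
  (forall a b, ins lo hi a -> ins lo hi b -> a <= b -> RInt g a b <= K) -> l <= K.
Proof.
  intros Hl HK. destruct (Rle_dec l K) as [|Hn]; auto. exfalso.
  destruct (Hl (l - K)) as [a0 [b0 [Ha0 [Hb0 [Hab0 H]]]]]. lra.
  specialize (H a0 b0). assert (Rabs (RInt g a0 b0 - l) < l - K).
  { apply H; [split; [apply Ha0|lra] | lra | apply Hb0]. }
  apply Rabs_def2 in H0. specialize (HK a0 b0 Ha0 Hb0 Hab0). lra.
Qed.

Lemma ins_ex (lo : R) (hi : Rbar) : Rbar_lt lo hi -> exists x, ins lo hi x.
Proof.
  destruct hi as [h| |]; simpl; intros H.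
  exists ((lo + h)/2). unfold ins; cbn in *; split; lra.
  exists (lo + 1). split; simpl; [lra|exact I].
  contradiction.
Qed.

Lemma Lim_sup g (lo : R) (hi : Rbar) K : Rbar_lt lo hi -> Cnt g lo hi -> Pos g lo hi ->
  (forall a b, ins lo hi a -> ins lo hi b -> a <= b -> RInt g a b <= K) ->
  exists l, Lim g lo hi l.
Proof.
  intros Hlh Hc Hp HK.
  set (E := fun r => exists a b, ins lo hi a /\ ins lo hi b /\ a <= b /\ r = RInt g a b).
  assert (Hb : bound E).
  { exists K. intros r [a [b [Ha [Hb [Hab ->]]]]]. apply HK; auto. }
  assert (Hne : exists r, E r).
  { destruct (ins_ex lo hi Hlh) as [x Hx]. exists (RInt g x x). exists x, x.
    repeat split; auto; try apply Hx; lra. }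
  destruct (completeness E Hb Hne) as [m [Hm1 Hm2]].
  exists m. intros eps Heps.
  assert (Hex : exists r, E r /\ m - eps < r).
  { apply NNPP. intro Hn.
    assert (m <= m - eps); try lra. apply Hm2. intros r Hr.
    destruct (Rle_dec r (m - eps)); auto. exfalso. apply Hn. exists r. split; auto. lra. }
  destruct Hex as [r [[a0 [b0 [Ha0 [Hb0 [Hab0 ->]]]]] Hr]].
  exists a0, b0. repeat split; auto; try apply Ha0; try apply Hb0.
  intros a b Ha Hb' Hbh.
  assert (Hia : ins lo hi a) by (split; try lra; apply Rbar_lt_le_trans with a0; try lra; apply Ha0).
  assert (Hib : ins lo hi b) by (split; auto; destruct Ha0; lra).
  assert (RInt g a0 b0 <= RInt g a b) by (apply RInt_mono with lo hi; auto; lra).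
  assert (RInt g a b <= m).
  { apply Hm1. exists a, b. repeat split; auto; try apply Hia; try apply Hib; lra. }
  apply Rabs_def1; lra.
Qed.

Lemma Lim_ext g h (lo : R) (hi : Rbar) l : (forall x, ins lo hi x -> g x = h x) ->
  Lim g lo hi l -> Lim h lo hi l.
Proof.
  intros He Hl eps Heps. destruct (Hl eps Heps) as [a0 [b0 [Ha0 [Hb0 [Hab H]]]]].
  exists a0, b0. repeat split; auto; try apply Ha0; try apply Hb0.
  intros a b Ha Hb Hbh. rewrite <- (RInt_ext g). apply H; auto.
  intros x Hx. apply He. unfold Rmin, Rmax in Hx. destruct (Rle_dec a b); [|lra].
  split; try lra. apply Rbar_lt_le_trans with b; auto; lra.
Qed.

Lemma Lim_lin g h (lo : R) (hi : Rbar) l1 l2 c d : Cnt g lo hi -> Cnt h lo hi ->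
  Lim g lo hi l1 -> Lim h lo hi l2 ->
  Lim (fun x => c * g x + d * h x) lo hi (c * l1 + d * l2).
Proof.
  intros Hcg Hch Hg Hh eps Heps.
  set (e := eps / (1 + Rabs c + Rabs d)).
  assert (He : 0 < e).
  { unfold e. apply Rdiv_lt_0_compat; auto. pose proof (Rabs_pos c); pose proof (Rabs_pos d); lra. }
  destruct (Hg e He) as [a1 [b1 [Ha1 [Hb1 [Hab1 H1]]]]].
  destruct (Hh e He) as [a2 [b2 [Ha2 [Hb2 [Hab2 H2]]]]].
  exists (Rmin a1 a2), (Rmax b1 b2).
  assert (Ham : ins lo hi (Rmin a1 a2)) by (unfold Rmin; destruct (Rle_dec a1 a2); auto).
  assert (Hbm : ins lo hi (Rmax b1 b2)) by (unfold Rmax; destruct (Rle_dec b1 b2); auto).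
  repeat split; auto; try apply Ham; try apply Hbm.
  { apply Rle_trans with a1. apply Rmin_l. apply Rle_trans with b1; auto. apply Rmax_l. }
  intros a b Ha Hb Hbh.
  assert (Ia : ins lo hi a).
  { split. lra. apply Rbar_lt_le_trans with (Rmin a1 a2). lra. apply Ham. }
  assert (Ib : ins lo hi b) by (split; auto; destruct Ia; pose proof (Rmin_l a1 a2);
     pose proof (Rmax_l b1 b2); lra).
  rewrite RInt_lin; try (apply Cnt_ex with lo hi; auto).
  assert (E1 : Rabs (RInt g a b - l1) < e).
  { apply H1; auto. pose proof (Rmin_l a1 a2); lra. pose proof (Rmax_l b1 b2); lra. }
  assert (E2 : Rabs (RInt h a b - l2) < e).
  { apply H2; auto. pose proof (Rmin_r a1 a2); lra. pose proof (Rmax_r b1 b2); lra. }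
  replace (c * RInt g a b + d * RInt h a b - (c * l1 + d * l2))
    with (c * (RInt g a b - l1) + d * (RInt h a b - l2)) by ring.
  apply Rle_lt_trans with (Rabs c * e + Rabs d * e).
  { eapply Rle_trans. apply Rabs_triang. rewrite !Rabs_mult.
    apply Rplus_le_compat; apply Rmult_le_compat_l; try apply Rabs_pos; lra. }
  assert (eps = e * (1 + Rabs c + Rabs d)).
  { unfold e. field. pose proof (Rabs_pos c); pose proof (Rabs_pos d); lra. }
  rewrite H. pose proof (Rabs_pos c); pose proof (Rabs_pos d); nra.
Qed.

Lemma Lim_ftc g F (lo : R) (hi : Rbar) FL FH : Cnt g lo hi ->
  (forall x, ins lo hi x -> is_derive F x (g x)) ->
  (forall eps, 0 < eps -> exists a0, ins lo hi a0 /\ forall a, lo < a <= a0 -> Rabs (F a - FL) < eps) ->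
  (forall eps, 0 < eps -> exists b0, ins lo hi b0 /\ forall b, b0 <= b -> Rbar_lt b hi -> Rabs (F b - FH) < eps) ->
  Lim g lo hi (FH - FL).
Proof.
  intros Hc Hd HL HH eps Heps.
  destruct (HL (eps/2)) as [a1 [Ha1 H1]]. lra.
  destruct (HH (eps/2)) as [b0 [Hb0 H2]]. lra.
  exists (Rmin a1 b0), b0.
  assert (Ham : ins lo hi (Rmin a1 b0)) by (unfold Rmin; destruct (Rle_dec a1 b0); auto).
  repeat split; auto; try apply Ham; try apply Hb0. apply Rmin_r.
  intros a b Ha Hb Hbh.
  assert (Ia : ins lo hi a).
  { split. lra. apply Rbar_lt_le_trans with (Rmin a1 b0). lra. apply Ham. }
  assert (Ib : ins lo hi b) by (split; auto; destruct Ia; pose proof (Rmin_r a1 b0); lra).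
  assert (HR : RInt g a b = F b - F a).
  { apply (is_RInt_unique (V:=R_CompleteNormedModule)).
    apply (is_RInt_derive (V:=R_CompleteNormedModule)).
    - intros x Hx. apply Hd. unfold Rmin, Rmax in Hx; destruct (Rle_dec a b); [|pose proof (Rmin_r a1 b0); lra].
      apply ins_mid with a b; auto.
    - intros x Hx. apply Hc. unfold Rmin, Rmax in Hx; destruct (Rle_dec a b); [|pose proof (Rmin_r a1 b0); lra].
      apply ins_mid with a b; auto. }
  rewrite HR.
  assert (A1 : Rabs (F a - FL) < eps/2) by (apply H1; pose proof (Rmin_l a1 b0); lra).
  assert (A2 : Rabs (F b - FH) < eps/2) by (apply H2; auto).
  apply Rabs_def2 in A1; apply Rabs_def2 in A2. apply Rabs_def1; lra.
Qed.

Lemma dcont (f : R -> R) x : ex_derive f x -> continuous f x.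
Proof. intros H. apply (ex_derive_continuous (K:=R_AbsRing) (V:=R_NormedModule)); auto. Qed.

Lemma RInt_scl (g : R -> R) a b c : ex_RInt g a b ->
  RInt (fun x => c * g x) a b = c * RInt g a b.
Proof.
  intros Hg. assert (E2 := RInt_scal (V:=R_CompleteNormedModule) g a b c Hg).
  unfold scal in *; simpl in *. unfold mult in *; simpl in *. exact E2.
Qed.

Lemma Lim_sub h l L (lo : R) : Cnt h 0 (Finite 1) -> Lim h 0 (Finite 1) l -> 0 < L ->
  Lim (fun t => h ((t - lo) / L)) lo (Finite (lo + L)) (L * l).
Proof.
  intros Hc Hl HL.
  set (k := fun t => h ((t - lo) / L)).
  assert (Hk : forall a b, ins lo (Finite (lo+L)) a -> ins lo (Finite (lo+L)) b ->
     RInt k a b = L * RInt h ((a-lo)/L) ((b-lo)/L)).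
  { intros a b Ha Hb.
    assert (Hex : ex_RInt h (/L * a + - lo / L) (/L * b + - lo / L)).
    { apply Cnt_ex with 0 (Finite 1); auto.
      destruct Ha as [Ha1 Ha2]; simpl in Ha2. split; simpl.
      replace (/ L * a + - lo / L) with ((a - lo) / L) by (field; lra).
      apply Rdiv_lt_0_compat; lra.
      replace (/ L * a + - lo / L) with ((a - lo) / L) by (field; lra).
      apply Rmult_lt_reg_r with L; auto. unfold Rdiv; rewrite Rmult_assoc, Rinv_l; lra.
      destruct Hb as [Ha1 Ha2]; simpl in Ha2. split; simpl.
      replace (/ L * b + - lo / L) with ((b - lo) / L) by (field; lra).
      apply Rdiv_lt_0_compat; lra.
      replace (/ L * b + - lo / L) with ((b - lo) / L) by (field; lra).
      apply Rmult_lt_reg_r with L; auto. unfold Rdiv; rewrite Rmult_assoc, Rinv_l; lra. }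
    assert (E := RInt_comp_lin (V:=R_CompleteNormedModule) h (/L) (- lo / L) a b Hex).
    unfold scal in E; simpl in E; unfold mult in E; simpl in E.
    replace (/ L * a + - lo / L) with ((a - lo) / L) in E by (field; lra).
    replace (/ L * b + - lo / L) with ((b - lo) / L) in E by (field; lra).
    rewrite <- E.
    assert (Ek : ex_RInt k a b).
    { apply (ex_RInt_continuous (V:=R_CompleteNormedModule)). intros z Hz. unfold k.
      apply (continuous_comp (fun t => (t - lo) / L) h).
      apply dcont. auto_derive. lra.
      apply Hc. assert (ins lo (Finite (lo+L)) z).
      { unfold Rmin, Rmax in Hz; destruct (Rle_dec a b).
        apply ins_mid with a b; auto. apply ins_mid with b a; auto; lra. }
      destruct H as [H1 H2]; simpl in H2. split; simpl.
      apply Rdiv_lt_0_compat; lra.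
      apply Rmult_lt_reg_r with L; auto. unfold Rdiv; rewrite Rmult_assoc, Rinv_l; lra. }
    rewrite (RInt_ext (V:=R_CompleteNormedModule) (fun y => / L * h (/ L * y + - lo / L)) (fun y => / L * k y)).
    rewrite RInt_scl; auto. rewrite <- Rmult_assoc, Rinv_r; [symmetry; apply Rmult_1_l|lra].
    intros x _. unfold k. f_equal. f_equal. field; lra. }
  intros eps Heps.
  destruct (Hl (eps / L)) as [a0 [b0 [Ha0 [Hb0 [Hab H]]]]]. apply Rdiv_lt_0_compat; auto.
  destruct Ha0 as [Ha01 Ha02]; destruct Hb0 as [Hb01 Hb02]; simpl in Ha02, Hb02.
  exists (lo + L * a0), (lo + L * b0).
  repeat split; simpl; try nra.
  intros a b Ha Hb Hbh; simpl in Hbh.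
  rewrite Hk; try (split; simpl; nra).
  replace (L * RInt h ((a - lo) / L) ((b - lo) / L) - L * l)
    with (L * (RInt h ((a - lo) / L) ((b - lo) / L) - l)) by ring.
  rewrite Rabs_mult, (Rabs_pos_eq L) by lra.
  assert (Rabs (RInt h ((a - lo) / L) ((b - lo) / L) - l) < eps / L).
  { apply H.
    split. apply Rdiv_lt_0_compat; lra.
    apply Rmult_le_reg_r with L; auto. unfold Rdiv; rewrite Rmult_assoc, Rinv_l; lra.
    apply Rmult_le_reg_r with L; auto. unfold Rdiv; rewrite Rmult_assoc, Rinv_l; lra.
    simpl. apply Rmult_lt_reg_r with L; auto. unfold Rdiv; rewrite Rmult_assoc, Rinv_l; lra. }
  apply Rmult_lt_compat_l with (r := L) in H0; auto.
  replace (L * (eps / L)) with eps in H0 by (field; lra). exact H0.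
Qed.

Lemma Lim_unique g (lo : R) (hi : Rbar) l1 l2 : Lim g lo hi l1 -> Lim g lo hi l2 -> l1 = l2.
Proof.
  intros H1 H2.
  destruct (Req_dec l1 l2) as [|Hn]; auto. exfalso.
  assert (He : 0 < Rabs (l1 - l2) / 2) by (apply Rdiv_lt_0_compat; [apply Rabs_pos_lt; lra | lra]).
  destruct (H1 _ He) as [a1 [b1 [Ha1 [Hb1 [Hab1 K1]]]]].
  destruct (H2 _ He) as [a2 [b2 [Ha2 [Hb2 [Hab2 K2]]]]].
  assert (Ham : ins lo hi (Rmin a1 a2)) by (unfold Rmin; destruct (Rle_dec a1 a2); auto).
  assert (Hbm : ins lo hi (Rmax b1 b2)) by (unfold Rmax; destruct (Rle_dec b1 b2); auto).
  pose proof (Rmin_l a1 a2); pose proof (Rmin_r a1 a2); pose proof (Rmax_l b1 b2); pose proof (Rmax_r b1 b2).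
  assert (E1 := K1 (Rmin a1 a2) (Rmax b1 b2)).
  assert (E2 := K2 (Rmin a1 a2) (Rmax b1 b2)).
  destruct Ham as [Hm1 Hm2]. destruct Hbm as [Hm3 Hm4].
  specialize (E1 (conj Hm1 H) H3 Hm4). specialize (E2 (conj Hm1 H0) H4 Hm4).
  assert (Rabs (l1 - l2) <= Rabs (RInt g (Rmin a1 a2) (Rmax b1 b2) - l1) + Rabs (RInt g (Rmin a1 a2) (Rmax b1 b2) - l2)).
  { replace (l1 - l2) with (- (RInt g (Rmin a1 a2) (Rmax b1 b2) - l1) + (RInt g (Rmin a1 a2) (Rmax b1 b2) - l2)) by ring.
    eapply Rle_trans. apply Rabs_triang. rewrite Rabs_Ropp. lra. }
  lra.
Qed.

Lemma cont_eps (f : R -> R) x : continuous f x ->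
  forall eps, 0 < eps -> exists del, 0 < del /\ forall y, Rabs (y - x) < del -> Rabs (f y - f x) < eps.
Proof.
  intros Hc eps Heps. apply continuity_pt_filterlim in Hc.
  destruct (Hc eps Heps) as [d [Hd H]]. exists d. split; auto.
  intros y Hy. destruct (Req_dec y x) as [->|Hne].
  rewrite Rminus_eq_0, Rabs_R0; auto.
  apply H. split. split; [exact I|auto]. exact Hy.
Qed.


Lemma Lim_imp g lo hi l : Cnt g lo (Finite hi) -> Lim g lo (Finite hi) l -> improper_int g lo hi l.
Proof.
  intros Hc Hl eps Heps. destruct (Hl eps Heps) as [a0 [b0 [Ha0 [Hb0 [Hab H]]]]].
  destruct Ha0 as [Ha1 Ha2]; destruct Hb0 as [Hb1 Hb2]; simpl in Ha2, Hb2.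
  exists (Rmin (a0 - lo) (hi - b0)). split.
  apply Rmin_glb_lt; lra.
  intros a b Ha Hb. pose proof (Rmin_l (a0 - lo) (hi - b0)). pose proof (Rmin_r (a0 - lo) (hi - b0)).
  assert (Ia : ins lo (Finite hi) a) by (split; simpl; lra).
  assert (Ib : ins lo (Finite hi) b) by (split; simpl; lra).
  exists (ex_RInt_Reals_0 _ _ _ (Cnt_ex g lo (Finite hi) a b Hc Ia Ib)).
  rewrite <- RInt_Reals. apply H; simpl; lra.
Qed.

Lemma Lim_imp_inf g lo l : Cnt g lo p_infty -> Lim g lo p_infty l -> improper_int_inf g lo l.
Proof.
  intros Hc Hl eps Heps. destruct (Hl eps Heps) as [a0 [b0 [Ha0 [Hb0 [Hab H]]]]].
  destruct Ha0 as [Ha1 Ha2]; destruct Hb0 as [Hb1 Hb2].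
  exists (a0 - lo). split. lra. exists b0.
  intros a b Ha Hb.
  assert (Ia : ins lo p_infty a) by (split; simpl; auto; lra).
  assert (Ib : ins lo p_infty b) by (split; simpl; auto; lra).
  exists (ex_RInt_Reals_0 _ _ _ (Cnt_ex g lo p_infty a b Hc Ia Ib)).
  rewrite <- RInt_Reals. apply H; simpl; auto; lra.
Qed.

Lemma small_eq x y : (forall eps, 0 < eps -> Rabs (x - y) < eps) -> x = y.
Proof.
  intros H. destruct (Req_dec x y) as [|Hn]; auto. exfalso.
  assert (0 < Rabs (x - y)) by (apply Rabs_pos_lt; lra).
  specialize (H _ H0). lra.
Qed.

Lemma imp_unique g lo hi l1 l2 : improper_int g lo hi l1 -> improper_int g lo hi l2 -> l1 = l2.
Proof.
  intros H1 H2. apply small_eq. intros eps Heps.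
  destruct (H1 (eps/2)) as [d1 [Hd1 K1]]. lra.
  destruct (H2 (eps/2)) as [d2 [Hd2 K2]]. lra.
  set (m := Rmin d1 d2). assert (0 < m) by (apply Rmin_glb_lt; lra).
  pose proof (Rmin_l d1 d2); pose proof (Rmin_r d1 d2).
  destruct (K1 (lo + m/2) (hi - m/2)) as [p1 E1]; try (unfold m in *; lra).
  destruct (K2 (lo + m/2) (hi - m/2)) as [p2 E2]; try (unfold m in *; lra).
  rewrite (RiemannInt_P5 p1 p2) in E1.
  apply Rabs_def2 in E1; apply Rabs_def2 in E2. apply Rabs_def1; lra.
Qed.

Lemma imp_inf_unique g lo l1 l2 : improper_int_inf g lo l1 -> improper_int_inf g lo l2 -> l1 = l2.
Proof.
  intros H1 H2. apply small_eq. intros eps Heps.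
  destruct (H1 (eps/2)) as [d1 [Hd1 [M1 K1]]]. lra.
  destruct (H2 (eps/2)) as [d2 [Hd2 [M2 K2]]]. lra.
  set (m := Rmin d1 d2). assert (0 < m) by (apply Rmin_glb_lt; lra).
  pose proof (Rmin_l d1 d2); pose proof (Rmin_r d1 d2).
  pose proof (Rmax_l M1 M2); pose proof (Rmax_r M1 M2).
  destruct (K1 (lo + m/2) (Rmax M1 M2 + 1)) as [p1 E1]; try (unfold m in *; lra).
  destruct (K2 (lo + m/2) (Rmax M1 M2 + 1)) as [p2 E2]; try (unfold m in *; lra).
  rewrite (RiemannInt_P5 p1 p2) in E1.
  apply Rabs_def2 in E1; apply Rabs_def2 in E2. apply Rabs_def1; lra.
Qed.

Lemma Rint_open_val g lo hi l : Cnt g lo (Finite hi) -> Lim g lo (Finite hi) l -> Rint_open g lo hi = l.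
Proof.
  intros Hc Hl. assert (H := Lim_imp g lo hi l Hc Hl).
  unfold Rint_open. apply (imp_unique g lo hi).
  apply epsilon_spec. exists l; auto. auto.
Qed.

Lemma Gamma_val nu l : Cnt (fun t => Rpower t (nu - 1) * exp (- t)) 0 p_infty ->
  Lim (fun t => Rpower t (nu - 1) * exp (- t)) 0 p_infty l -> Gamma_fn nu = l.
Proof.
  intros Hc Hl. assert (H := Lim_imp_inf _ 0 l Hc Hl).
  unfold Gamma_fn. apply (imp_inf_unique (fun t => Rpower t (nu - 1) * exp (- t)) 0).
  apply epsilon_spec. exists l; auto. auto.
Qed.


Lemma exp_sub_ln A t : 0 < t -> exp (A - ln t) = exp A / t.
Proof. intros. unfold Rminus, Rdiv. rewrite exp_plus, exp_Ropp, exp_ln; auto. Qed.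
Lemma exp_add_ln A t : 0 < t -> exp (A + ln t) = exp A * t.
Proof. intros. rewrite exp_plus, exp_ln; auto. Qed.

Lemma exp_le x y : x <= y -> exp x <= exp y.
Proof. intros [H|H]. left; apply exp_increasing; auto. right; subst; auto. Qed.

Lemma ln_div x y : 0 < x -> 0 < y -> ln (x / y) = ln x - ln y.
Proof. intros. unfold Rdiv. rewrite ln_mult, ln_Rinv; try ring; auto. apply Rinv_0_lt_compat; auto. Qed.

Lemma ln_le_sub1 x : 0 < x -> ln x <= x - 1.
Proof. intros. pose proof (exp_ineq1_le (ln x)). rewrite exp_ln in H0; auto. lra. Qed.

Lemma exp_lt_eps y eps : 0 < eps -> y < ln eps -> exp y < eps.
Proof. intros. rewrite <- (exp_ln eps); auto. apply exp_increasing; auto. Qed.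

Lemma pw_small a : 0 < a -> forall eps, 0 < eps -> exists del, 0 < del /\
  forall t, 0 < t < del -> exp (a * ln t) < eps.
Proof.
  intros Ha eps He. exists (exp (ln eps / a)). split. apply exp_pos.
  intros t [Ht1 Ht2]. apply exp_lt_eps; auto.
  apply ln_increasing in Ht2; auto. rewrite ln_exp in Ht2.
  apply Rmult_lt_compat_l with (r := a) in Ht2; auto.
  replace (a * (ln eps / a)) with (ln eps) in Ht2 by (field; lra). lra.
Qed.

Lemma RInt_ftc (f F : R -> R) a b : a <= b ->
  (forall x, a <= x <= b -> is_derive F x (f x)) ->
  (forall x, a <= x <= b -> continuous f x) -> RInt f a b = F b - F a.
Proof.
  intros Hab Hd Hc.
  apply (is_RInt_unique (V:=R_CompleteNormedModule)).
  apply (is_RInt_derive (V:=R_CompleteNormedModule)).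
  - intros x Hx. apply Hd. unfold Rmin, Rmax in Hx; destruct (Rle_dec a b); lra.
  - intros x Hx. apply Hc. unfold Rmin, Rmax in Hx; destruct (Rle_dec a b); lra.
Qed.

Lemma RInt_le' (f g : R -> R) a b : a <= b -> ex_RInt f a b -> ex_RInt g a b ->
  (forall x, a <= x <= b -> f x <= g x) -> RInt f a b <= RInt g a b.
Proof. intros. apply RInt_le; auto. intros; apply H2; lra. Qed.

Definition gi a t := exp ((a - 1) * ln t - t).

Lemma gi_cnt a : Cnt (gi a) 0 p_infty.
Proof. intros x [Hx _]. unfold gi. apply dcont. auto_derive. auto. Qed.

Lemma gi_pos a : Pos (gi a) 0 p_infty.
Proof. intros x _. unfold gi. left; apply exp_pos. Qed.

Lemma gi_ex a : 0 < a -> exists l, Lim (gi a) 0 p_infty l.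
Proof.
  intros Ha.
  set (C := exp ((a + 1) * ln (a + 1))).
  set (h := fun t => C * exp ((a - 1) * ln t - (a + 1) * ln (1 + t))).
  set (F := fun t => C / a * exp (a * ln t - a * ln (1 + t))).
  apply Lim_sup with (C / a). simpl; auto. apply gi_cnt. apply gi_pos.
  intros c d [Hc _] [Hd _] Hcd.
  assert (Hh : forall x, 0 < x -> continuous h x).
  { intros x Hx. unfold h. apply dcont. auto_derive. lra. }
  apply Rle_trans with (RInt h c d).
  { apply RInt_le'; auto.
    apply Cnt_ex with 0 p_infty; auto. apply gi_cnt. split; simpl; auto. split; simpl; auto.
    apply (ex_RInt_continuous (V:=R_CompleteNormedModule)). intros z Hz. apply Hh.
    unfold Rmin in Hz; destruct (Rle_dec c d); lra.
    intros x Hx. unfold gi, h, C. rewrite <- exp_plus. apply exp_le.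
    assert (0 < x) by lra.
    assert (ln (1 + x) - ln (a + 1) <= (x - a) / (a + 1)).
    { rewrite <- ln_div by lra. eapply Rle_trans. apply ln_le_sub1.
      apply Rdiv_lt_0_compat; lra. right. field. lra. }
    assert ((a+1) * (ln (1 + x) - ln (a + 1)) <= x - a).
    { apply Rmult_le_compat_l with (r := a+1) in H0; [|lra].
      replace ((a + 1) * ((x - a) / (a + 1))) with (x - a) in H0 by (field; lra). lra. }
    nra. }
  rewrite (RInt_ftc h F c d); auto.
  - assert (0 < F c) by (unfold F; apply Rmult_lt_0_compat; [apply Rdiv_lt_0_compat; [apply exp_pos|auto] | apply exp_pos]).
    assert (F d <= C / a).
    { unfold F. rewrite <- (Rmult_1_r (C / a)) at 2. apply Rmult_le_compat_l.
      left; apply Rdiv_lt_0_compat; [apply exp_pos|auto].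
      rewrite <- exp_0 at 2. apply exp_le.
      assert (ln d < ln (1 + d)) by (apply ln_increasing; lra). nra. }
    lra.
  - intros x Hx. unfold F, h. auto_derive. lra.
    replace ((a - 1) * ln x - (a + 1) * ln (1 + x)) with (a * ln x - a * ln (1 + x) - ln x - ln (1 + x)) by ring.
    rewrite exp_sub_ln, exp_sub_ln by lra. unfold Rminus. field. lra.
  - intros x Hx. apply Hh. lra.
Qed.


Lemma lim_left_cont (F : R -> R) (lo : R) (hi : Rbar) : Rbar_lt lo hi -> continuous F lo ->
  forall eps, 0 < eps -> exists a0, ins lo hi a0 /\ forall a, lo < a <= a0 -> Rabs (F a - F lo) < eps.
Proof.
  intros Hlh Hc eps He. destruct (cont_eps F lo Hc eps He) as [d [Hd H]].
  destruct (ins_ex lo hi Hlh) as [x0 Hx0].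
  exists (Rmin x0 (lo + d/2)). destruct Hx0 as [Hx1 Hx2]. split.
  - split. apply Rmin_glb_lt; lra. apply Rbar_lt_le_trans with x0; auto. apply Rmin_l.
  - intros a Ha. apply H. pose proof (Rmin_r x0 (lo + d/2)). rewrite Rabs_pos_eq; lra.
Qed.

Lemma Gamma_lim a : 0 < a -> Lim (gi a) 0 p_infty (Gamma_fn a).
Proof.
  intros Ha. destruct (gi_ex a Ha) as [l Hl].
  assert (E : Gamma_fn a = l).
  { apply Gamma_val.
    intros x [Hx _]. unfold Rpower. apply dcont. auto_derive. auto.
    apply Lim_ext with (gi a); auto. intros x [Hx _]. unfold gi, Rpower.
    rewrite <- exp_plus. f_equal; try ring. }
  rewrite E; auto.
Qed.

Lemma exp_neg_small eps : 0 < eps -> forall b, - ln eps < b -> exp (- b) < eps.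
Proof. intros. apply exp_lt_eps; auto; lra. Qed.

Lemma Gamma_1 : Gamma_fn 1 = 1.
Proof.
  assert (H : Lim (gi 1) 0 p_infty (0 - (- 1))).
  { apply Lim_ftc with (F := fun t => - exp (- t)).
    - apply gi_cnt.
    - intros x [Hx _]. unfold gi. auto_derive. auto.
      replace ((1 - 1) * ln x - x) with (- x) by ring. ring.
    - intros eps He. 
      destruct (lim_left_cont (fun t => - exp (- t)) 0 p_infty I) with (eps := eps) as [a0 [Ha0 K]]; auto.
      apply dcont; auto_derive; auto.
      exists a0; split; auto. intros a Ha. specialize (K a Ha).
      rewrite Ropp_0, exp_0 in K. exact K.
    - intros eps He. exists (Rmax 1 (1 - ln eps)). split.
      split; simpl; auto. pose proof (Rmax_l 1 (1 - ln eps)); lra.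
      intros b Hb _. pose proof (Rmax_r 1 (1 - ln eps)).
      rewrite Rminus_0_r, Rabs_Ropp, Rabs_pos_eq by (left; apply exp_pos).
      apply exp_neg_small; auto; lra. }
  pose proof (Lim_unique _ _ _ _ _ (Gamma_lim 1 Rlt_0_1) H). lra.
Qed.

Lemma ln_lin_bound a t : 0 < a -> 0 < t -> a * ln t <= a * ln (2 * a) + t / 2 - a.
Proof.
  intros Ha Ht.
  assert (ln t = ln (2 * a) + ln (t / (2 * a))).
  { rewrite <- ln_mult. f_equal. field. lra. lra. apply Rdiv_lt_0_compat; lra. }
  rewrite H. assert (ln (t / (2 * a)) <= t / (2 * a) - 1) by (apply ln_le_sub1; apply Rdiv_lt_0_compat; lra).
  apply Rmult_le_compat_l with (r := a) in H0; [|lra].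
  replace (a * (t / (2 * a) - 1)) with (t/2 - a) in H0 by (field; lra). lra.
Qed.

Lemma Gamma_succ a : 0 < a -> Gamma_fn (a + 1) = a * Gamma_fn a.
Proof.
  intros Ha.
  assert (H : Lim (fun t => a * gi a t + (-1) * gi (a + 1) t) 0 p_infty (0 - 0)).
  { apply Lim_ftc with (F := fun t => exp (a * ln t - t)).
    - intros x [Hx _]. unfold gi. apply dcont. auto_derive. auto. auto.
    - intros x [Hx _]. unfold gi. auto_derive. auto.
      replace ((a + 1 - 1) * ln x - x) with (a * ln x - x) by ring.
      replace ((a - 1) * ln x - x) with (a * ln x - x - ln x) by ring.
      rewrite exp_sub_ln by auto. unfold Rminus. field. lra.
    - intros eps He. destruct (pw_small a Ha eps He) as [d [Hd K]].
      exists (d/2). split. split; simpl; auto; lra.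
      intros t Ht. rewrite Rminus_0_r, Rabs_pos_eq by (left; apply exp_pos).
      apply Rle_lt_trans with (exp (a * ln t)). apply exp_le. lra. apply K. lra.
    - intros eps He. set (c := a * ln (2 * a) - a).
      exists (Rmax 1 (2 * (c - ln eps) + 1)). split.
      split; simpl; auto. pose proof (Rmax_l 1 (2 * (c - ln eps) + 1)); lra.
      intros b Hb _. pose proof (Rmax_r 1 (2 * (c - ln eps) + 1)). pose proof (Rmax_l 1 (2 * (c - ln eps) + 1)).
      rewrite Rminus_0_r, Rabs_pos_eq by (left; apply exp_pos).
      apply exp_lt_eps; auto. pose proof (ln_lin_bound a b Ha ltac:(lra)). unfold c in *. lra. }
  assert (H2 := Lim_lin (gi a) (gi (a + 1)) 0 p_infty _ _ a (-1) (gi_cnt a) (gi_cnt (a+1))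
     (Gamma_lim a Ha) (Gamma_lim (a + 1) ltac:(lra))).
  pose proof (Lim_unique _ _ _ _ _ H H2). lra.
Qed.

Lemma Gamma_pos a : 0 < a -> 0 < Gamma_fn a.
Proof.
  intros Ha. apply Rlt_le_trans with (RInt (gi a) 1 2).
  apply RInt_gt_0. lra. intros; unfold gi; apply exp_pos.
  intros; apply gi_cnt; split; simpl; auto; lra.
  apply Lim_ge with 0 p_infty; auto. apply gi_cnt. apply gi_pos. apply Gamma_lim; auto.
  split; simpl; auto; lra. split; simpl; auto; lra. lra.
Qed.


Lemma ln_le x y : 0 < x -> x <= y -> ln x <= ln y.
Proof. intros Hx [H|H]. left; apply ln_increasing; auto. right; subst; auto. Qed.

Lemma exp_le1 x : x <= 0 -> exp x <= 1.
Proof. intros. rewrite <- exp_0. apply exp_le; auto. Qed.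

Lemma ln2_pos : 0 < ln 2.
Proof. rewrite <- ln_1. apply ln_increasing; lra. Qed.

Lemma mul_abs_bound c L : - ln 2 <= L <= 0 -> c * L <= Rabs c * ln 2.
Proof.
  intros HL. destruct (Rle_dec 0 c).
  rewrite Rabs_pos_eq by auto. pose proof ln2_pos. nra.
  rewrite Rabs_left1 by lra. nra.
Qed.

Lemma ln_half_bound s : 1/2 <= s <= 1 -> - ln 2 <= ln s <= 0.
Proof.
  intros Hs. split.
  replace (- ln 2) with (ln (/ 2)) by (rewrite ln_Rinv; lra).
  apply ln_le; lra. rewrite <- ln_1. apply ln_le; lra.
Qed.

Definition bi a b s := exp ((a - 1) * ln s + (b - 1) * ln (1 - s)).

Lemma bi_cnt a b : Cnt (bi a b) 0 (Finite 1).
Proof. intros x [Hx Hx']. simpl in Hx'. unfold bi. apply dcont. auto_derive. lra. Qed.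

Lemma bi_pos a b : Pos (bi a b) 0 (Finite 1).
Proof. intros x _. unfold bi. left; apply exp_pos. Qed.

Lemma bi_ex a b : 0 < a -> 0 < b -> exists l, Lim (bi a b) 0 (Finite 1) l.
Proof.
  intros Ha Hb.
  set (K := exp ((Rabs (a - 1) + Rabs (b - 1)) * ln 2)).
  set (h := fun s => K * (exp ((a - 1) * ln s) + exp ((b - 1) * ln (1 - s)))).
  set (F := fun s => K * (exp (a * ln s) / a - exp (b * ln (1 - s)) / b)).
  assert (HK : 0 < K) by apply exp_pos.
  apply Lim_sup with (K * (1/a + 1/b)). simpl; lra. apply bi_cnt. apply bi_pos.
  intros c d [Hc Hc'] [Hd Hd'] Hcd; simpl in Hc', Hd'.
  assert (Hh : forall x, 0 < x < 1 -> continuous h x).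
  { intros x Hx. unfold h. apply dcont. auto_derive. lra. }
  apply Rle_trans with (RInt h c d).
  { apply RInt_le'; auto.
    apply Cnt_ex with 0 (Finite 1); auto. apply bi_cnt. split; simpl; auto. split; simpl; auto.
    apply (ex_RInt_continuous (V:=R_CompleteNormedModule)). intros z Hz. apply Hh.
    unfold Rmin, Rmax in Hz; destruct (Rle_dec c d); lra.
    intros x Hx. unfold bi, h, K.
    assert (E1 := exp_pos ((a - 1) * ln x)). assert (E2 := exp_pos ((b - 1) * ln (1 - x))).
    destruct (Rle_dec x (1/2)).
    - apply Rle_trans with (exp ((Rabs (a - 1) + Rabs (b - 1)) * ln 2) * exp ((a - 1) * ln x)).
      rewrite <- exp_plus. apply exp_le.
      assert ((b - 1) * ln (1 - x) <= Rabs (b - 1) * ln 2) by (apply mul_abs_bound; apply ln_half_bound; lra).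
      pose proof (Rabs_pos (a - 1)). pose proof ln2_pos. nra.
      apply Rmult_le_compat_l. left; apply exp_pos. lra.
    - apply Rle_trans with (exp ((Rabs (a - 1) + Rabs (b - 1)) * ln 2) * exp ((b - 1) * ln (1 - x))).
      rewrite <- exp_plus. apply exp_le.
      assert ((a - 1) * ln x <= Rabs (a - 1) * ln 2) by (apply mul_abs_bound; apply ln_half_bound; lra).
      pose proof (Rabs_pos (b - 1)). pose proof ln2_pos. nra.
      apply Rmult_le_compat_l. left; apply exp_pos. lra. }
  rewrite (RInt_ftc h F c d); auto.
  - assert (exp (a * ln d) <= 1).
    { apply exp_le1. assert (ln d < 0) by (rewrite <- ln_1; apply ln_increasing; lra). nra. }
    assert (exp (b * ln (1 - c)) <= 1).
    { apply exp_le1. assert (ln (1 - c) < 0) by (rewrite <- ln_1; apply ln_increasing; lra). nra. }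
    assert (0 < exp (a * ln c)) by apply exp_pos. assert (0 < exp (b * ln (1 - d))) by apply exp_pos.
    unfold F.
    assert (exp (a * ln d) / a <= 1 / a) by (apply Rmult_le_compat_r; [left; apply Rinv_0_lt_compat|]; lra).
    assert (exp (b * ln (1 - c)) / b <= 1 / b) by (apply Rmult_le_compat_r; [left; apply Rinv_0_lt_compat|]; lra).
    assert (0 <= exp (a * ln c) / a) by (apply Rlt_le, Rdiv_lt_0_compat; lra).
    assert (0 <= exp (b * ln (1 - d)) / b) by (apply Rlt_le, Rdiv_lt_0_compat; lra).
    apply Rmult_le_reg_l with (/K). apply Rinv_0_lt_compat; auto.
    rewrite <- Rmult_minus_distr_l, <- !Rmult_assoc, Rinv_l by lra. lra.
  - intros x Hx. unfold F, h. auto_derive. lra.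
    replace ((a - 1) * ln x) with (a * ln x - ln x) by ring.
    replace ((b - 1) * ln (1 - x)) with (b * ln (1 - x) - ln (1 - x)) by ring.
    rewrite exp_sub_ln, exp_sub_ln by lra. unfold Rminus. field. lra.
  - intros x Hx. apply Hh. lra.
Qed.

Definition Bv a b := epsilon (inhabits 0) (fun l => Lim (bi a b) 0 (Finite 1) l).

Lemma Bv_lim a b : 0 < a -> 0 < b -> Lim (bi a b) 0 (Finite 1) (Bv a b).
Proof. intros. unfold Bv. apply epsilon_spec. apply bi_ex; auto. Qed.

Lemma pw_small_right b : 0 < b -> forall eps, 0 < eps -> exists b0, ins 0 (Finite 1) b0 /\
  forall s, b0 <= s -> Rbar_lt s (Finite 1) -> exp (b * ln (1 - s)) < eps.
Proof.
  intros Hb eps He. destruct (pw_small b Hb eps He) as [d [Hd K]].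
  exists (Rmax (1 - d/2) (1/2)). pose proof (Rmax_l (1 - d/2) (1/2)); pose proof (Rmax_r (1 - d/2) (1/2)).
  split. split; simpl. lra. unfold Rmax; destruct (Rle_dec (1 - d/2) (1/2)); lra.
  intros s Hs Hs1; simpl in Hs1. apply K. lra.
Qed.

Lemma B_1 b : 0 < b -> Bv 1 b = 1 / b.
Proof.
  intros Hb.
  set (F := fun s => - (exp (b * ln (1 - s)) / b)).
  assert (H : Lim (bi 1 b) 0 (Finite 1) (0 - F 0)).
  { apply Lim_ftc with (F := F).
    - apply bi_cnt.
    - intros x [Hx Hx']; simpl in Hx'. unfold bi, F. auto_derive. lra.
      replace ((1 - 1) * ln x + (b - 1) * ln (1 - x)) with (b * ln (1 - x) - ln (1 - x)) by ring.
      rewrite exp_sub_ln by lra. unfold Rminus. field. lra.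
    - apply lim_left_cont. simpl; lra. apply dcont. unfold F. auto_derive. lra.
    - intros eps He. destruct (pw_small_right b Hb (eps * b)) as [b0 [Hb0 K]]. nra.
      exists b0. split; auto. intros s Hs Hs1. specialize (K s Hs Hs1).
      unfold F. rewrite Rminus_0_r, Rabs_Ropp, Rabs_pos_eq by (apply Rlt_le, Rdiv_lt_0_compat; [apply exp_pos|lra]).
      apply Rmult_lt_reg_r with b; auto. unfold Rdiv; rewrite Rmult_assoc, Rinv_l; lra. }
  assert (E : 0 - F 0 = 1 / b).
  { unfold F. rewrite Rminus_0_r, ln_1, Rmult_0_r, exp_0. field. lra. }
  rewrite <- E. apply (Lim_unique (bi 1 b) 0 (Finite 1)); auto. apply Bv_lim; lra.
Qed.

Lemma bi_shift_a a b s : 0 < s -> bi (a + 1) b s = bi a b s * s.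
Proof. intros. unfold bi. rewrite <- exp_add_ln by auto. f_equal. ring. Qed.
Lemma bi_shift_b a b s : s < 1 -> bi a (b + 1) s = bi a b s * (1 - s).
Proof. intros. unfold bi. rewrite <- exp_add_ln by lra. f_equal. ring. Qed.

Lemma B_succ a b : 0 < a -> 0 < b -> (a + b) * Bv (a + 1) b = a * Bv a b.
Proof.
  intros Ha Hb.
  assert (L1 := Lim_lin (bi (a + 1) b) (bi a (b + 1)) 0 (Finite 1) _ _ 1 1 (bi_cnt _ _) (bi_cnt _ _)
    (Bv_lim (a + 1) b ltac:(lra) Hb) (Bv_lim a (b + 1) Ha ltac:(lra))).
  assert (L1' : Lim (bi a b) 0 (Finite 1) (1 * Bv (a + 1) b + 1 * Bv a (b + 1))).
  { apply Lim_ext with (2 := L1). intros x [Hx Hx']; simpl in Hx'.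
    rewrite bi_shift_a, bi_shift_b by lra. ring. }
  assert (E1 := Lim_unique _ _ _ _ _ L1' (Bv_lim a b Ha Hb)).
  assert (L2 := Lim_lin (bi a (b + 1)) (bi (a + 1) b) 0 (Finite 1) _ _ a (- b) (bi_cnt _ _) (bi_cnt _ _)
    (Bv_lim a (b + 1) Ha ltac:(lra)) (Bv_lim (a + 1) b ltac:(lra) Hb)).
  assert (L3 : Lim (fun s => a * bi a (b + 1) s + - b * bi (a + 1) b s) 0 (Finite 1) (0 - 0)).
  { apply Lim_ftc with (F := fun s => exp (a * ln s + b * ln (1 - s))).
    - intros x [Hx Hx']; simpl in Hx'. unfold bi. apply dcont. auto_derive; lra.
    - intros x [Hx Hx']; simpl in Hx'. unfold bi. auto_derive. lra.
      replace ((a - 1) * ln x + (b + 1 - 1) * ln (1 - x)) with (a * ln x + b * ln (1 - x) - ln x) by ring.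
      replace ((a + 1 - 1) * ln x + (b - 1) * ln (1 - x)) with (a * ln x + b * ln (1 - x) - ln (1 - x)) by ring.
      rewrite !exp_sub_ln by lra. unfold Rminus. field. lra.
    - intros eps He. destruct (pw_small a Ha eps He) as [d [Hd K]].
      exists (Rmin (d/2) (1/2)). pose proof (Rmin_l (d/2) (1/2)); pose proof (Rmin_r (d/2) (1/2)).
      split. split; simpl. apply Rmin_glb_lt; lra. lra.
      intros t Ht. rewrite Rminus_0_r, Rabs_pos_eq by (left; apply exp_pos).
      apply Rle_lt_trans with (exp (a * ln t)). apply exp_le.
      assert (ln (1 - t) < 0) by (rewrite <- ln_1; apply ln_increasing; lra). nra. apply K. lra.
    - intros eps He. destruct (pw_small_right b Hb eps He) as [b0 [Hb0 K]].
      exists b0. split; auto. intros s Hs Hs1. specialize (K s Hs Hs1). destruct Hb0 as [Hb01 _].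
      simpl in Hs1. rewrite Rminus_0_r, Rabs_pos_eq by (left; apply exp_pos).
      apply Rle_lt_trans with (exp (b * ln (1 - s))); auto. apply exp_le.
      assert (ln s < 0) by (rewrite <- ln_1; apply ln_increasing; lra). nra. }
  assert (E2 := Lim_unique _ _ _ _ _ L3 L2).
  rewrite <- E1. nra.
Qed.

Lemma B_pos a b : 0 < a -> 0 < b -> 0 < Bv a b.
Proof.
  intros Ha Hb. apply Rlt_le_trans with (RInt (bi a b) (1/4) (3/4)).
  apply RInt_gt_0. lra. intros; unfold bi; apply exp_pos.
  intros; apply bi_cnt; split; simpl; lra.
  apply Lim_ge with 0 (Finite 1); auto. apply bi_cnt. apply bi_pos. apply Bv_lim; auto.
  split; simpl; lra. split; simpl; lra. lra.
Qed.


Lemma exp_convex la u v : 0 <= la <= 1 -> exp (la * u + (1 - la) * v) <= la * exp u + (1 - la) * exp v.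
Proof.
  intros Hl. set (m := la * u + (1 - la) * v).
  assert (Eu : exp u = exp m * exp (u - m)) by (rewrite <- exp_plus; f_equal; ring).
  assert (Ev : exp v = exp m * exp (v - m)) by (rewrite <- exp_plus; f_equal; ring).
  pose proof (exp_ineq1_le (u - m)). pose proof (exp_ineq1_le (v - m)). pose proof (exp_pos m).
  rewrite Eu, Ev.
  assert (la * (1 + (u - m)) + (1 - la) * (1 + (v - m)) = 1) by (unfold m; ring).
  assert (exp m * (la * exp (u - m) + (1 - la) * exp (v - m)) >= exp m * 1).
  { apply Rle_ge. apply Rmult_le_compat_l. lra. rewrite <- H2. nra. }
  nra.
Qed.

Lemma ex_RInt_lin (g h : R -> R) a b c d : ex_RInt g a b -> ex_RInt h a b ->
  ex_RInt (fun x => c * g x + d * h x) a b.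
Proof.
  intros Hg Hh.
  exact (ex_RInt_plus (V:=R_NormedModule) (fun x => scal c (g x)) (fun x => scal d (h x)) a b
     (ex_RInt_scal _ _ _ _ Hg) (ex_RInt_scal _ _ _ _ Hh)).
Qed.

Lemma holder (A B : R -> R) (lo : R) (hi : Rbar) la GA GB GC : 0 < la < 1 ->
  Cnt (fun t => exp (A t)) lo hi -> Cnt (fun t => exp (B t)) lo hi ->
  Cnt (fun t => exp (la * A t + (1 - la) * B t)) lo hi ->
  Lim (fun t => exp (A t)) lo hi GA -> Lim (fun t => exp (B t)) lo hi GB ->
  Lim (fun t => exp (la * A t + (1 - la) * B t)) lo hi GC -> 0 < GA -> 0 < GB ->
  GC <= exp (la * ln GA + (1 - la) * ln GB).
Proof.
  intros Hla HcA HcB HcC HA HB HC HGA HGB.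
  set (K := exp (la * ln GA + (1 - la) * ln GB)).
  assert (HK : 0 < K) by apply exp_pos.
  apply Lim_le with (1 := HC). intros c d Hc Hd Hcd.
  assert (HPA : Pos (fun t => exp (A t)) lo hi) by (intros x _; left; apply exp_pos).
  assert (HPB : Pos (fun t => exp (B t)) lo hi) by (intros x _; left; apply exp_pos).
  assert (IA := Lim_ge _ _ _ _ _ _ HcA HPA HA Hc Hd Hcd).
  assert (IB := Lim_ge _ _ _ _ _ _ HcB HPB HB Hc Hd Hcd).
  assert (XA := Cnt_ex _ _ _ _ _ HcA Hc Hd).
  assert (XB := Cnt_ex _ _ _ _ _ HcB Hc Hd).
  apply Rle_trans with (RInt (fun t => (K * la / GA) * exp (A t) + (K * (1 - la) / GB) * exp (B t)) c d).
  - apply RInt_le'; auto.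
    + apply Cnt_ex with lo hi; auto.
    + apply ex_RInt_lin; auto.
    + intros x Hx.
      assert (E : exp (la * A x + (1 - la) * B x) =
                  K * exp (la * (A x - ln GA) + (1 - la) * (B x - ln GB))).
      { unfold K. rewrite <- exp_plus. f_equal. ring. }
      rewrite E.
      apply Rle_trans with (K * (la * exp (A x - ln GA) + (1 - la) * exp (B x - ln GB))).
      apply Rmult_le_compat_l. lra. apply exp_convex. lra.
      rewrite !exp_sub_ln by auto. right. field. lra.
  - rewrite RInt_lin by auto.
    apply Rle_trans with (K * la / GA * GA + K * (1 - la) / GB * GB).
    apply Rplus_le_compat; apply Rmult_le_compat_l; auto;
      apply Rlt_le, Rdiv_lt_0_compat; nra.
    right. field. lra.
Qed.

Definition LC (f : R -> R) := forall x z la, 0 < x -> 0 < z -> 0 < la < 1 ->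
  ln (f (la * x + (1 - la) * z)) <= la * ln (f x) + (1 - la) * ln (f z).

Lemma Gamma_LC : LC Gamma_fn.
Proof.
  intros x z la Hx Hz Hla.
  assert (Hy : 0 < la * x + (1 - la) * z) by nra.
  assert (H := holder (fun t => (x - 1) * ln t - t) (fun t => (z - 1) * ln t - t) 0 p_infty la
     (Gamma_fn x) (Gamma_fn z) (Gamma_fn (la * x + (1 - la) * z)) Hla (gi_cnt x) (gi_cnt z)).
  assert (HC : Cnt (fun t => exp (la * ((x - 1) * ln t - t) + (1 - la) * ((z - 1) * ln t - t))) 0 p_infty).
  { intros t [Ht _]. apply dcont. auto_derive. auto. }
  specialize (H HC (Gamma_lim x Hx) (Gamma_lim z Hz)).
  assert (HL : Lim (fun t => exp (la * ((x - 1) * ln t - t) + (1 - la) * ((z - 1) * ln t - t))) 0 p_infty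
                (Gamma_fn (la * x + (1 - la) * z))).
  { apply Lim_ext with (2 := Gamma_lim _ Hy). intros t _. unfold gi. f_equal. ring. }
  specialize (H HL (Gamma_pos x Hx) (Gamma_pos z Hz)).
  apply ln_le in H. rewrite ln_exp in H. exact H. apply Gamma_pos; auto.
Qed.

Lemma B_LC b : 0 < b -> LC (fun a => Bv a b).
Proof.
  intros Hb x z la Hx Hz Hla.
  assert (Hy : 0 < la * x + (1 - la) * z) by nra.
  assert (H := holder (fun t => (x - 1) * ln t + (b - 1) * ln (1 - t)) (fun t => (z - 1) * ln t + (b - 1) * ln (1 - t)) 0 (Finite 1) la
     (Bv x b) (Bv z b) (Bv (la * x + (1 - la) * z) b) Hla (bi_cnt x b) (bi_cnt z b)).
  assert (HC : Cnt (fun t => exp (la * ((x - 1) * ln t + (b - 1) * ln (1 - t)) + (1 - la) * ((z - 1) * ln t + (b - 1) * ln (1 - t)))) 0 (Finite 1)).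
  { intros t [Ht Ht']; simpl in Ht'. apply dcont. auto_derive. lra. }
  specialize (H HC (Bv_lim x b Hx Hb) (Bv_lim z b Hz Hb)).
  assert (HL : Lim (fun t => exp (la * ((x - 1) * ln t + (b - 1) * ln (1 - t)) + (1 - la) * ((z - 1) * ln t + (b - 1) * ln (1 - t)))) 0 (Finite 1)
                (Bv (la * x + (1 - la) * z) b)).
  { apply Lim_ext with (2 := Bv_lim _ b Hy Hb). intros t _. unfold bi. f_equal. ring. }
  specialize (H HL (B_pos x b Hx Hb) (B_pos z b Hz Hb)).
  apply ln_le in H. rewrite ln_exp in H. exact H. apply B_pos; auto.
Qed.


Lemma nat_big d : 0 < d -> exists k : nat, / d < INR k.
Proof.
  intros Hd. destruct (archimed (/ d)) as [H1 H2].
  assert (Hu : (0 <= up (/ d))%Z).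
  { apply le_IZR. pose proof (Rinv_0_lt_compat d Hd). simpl. lra. }
  exists (Z.to_nat (up (/ d))). rewrite INR_IZR_INZ, Z2Nat.id; auto.
Qed.

Section BM.
Variables f g : R -> R.
Hypothesis fpos : forall x, 0 < x -> 0 < f x.
Hypothesis gpos : forall x, 0 < x -> 0 < g x.
Hypothesis fsucc : forall x, 0 < x -> f (x + 1) = x * f x.
Hypothesis gsucc : forall x, 0 < x -> g (x + 1) = x * g x.
Hypothesis fLC : LC f.
Hypothesis gLC : LC g.

Let r y := ln (f y) - ln (g y).

Lemma r_per y : 0 < y -> r (y + 1) = r y.
Proof.
  intros Hy. unfold r. rewrite fsucc, gsucc, !ln_mult; auto; try ring.
Qed.

Lemma r_per_n (k : nat) y : 0 < y -> r (y + INR k) = r y.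
Proof.
  intros Hy. induction k. simpl. rewrite Rplus_0_r; auto.
  rewrite S_INR. replace (y + (INR k + 1)) with ((y + INR k) + 1) by ring.
  rewrite r_per; auto. pose proof (pos_INR k); lra.
Qed.

Lemma bounds (h : R -> R) : (forall x, 0 < x -> 0 < h x) -> (forall x, 0 < x -> h (x + 1) = x * h x) -> LC h ->
  forall n x, 1 < n -> 0 < x < 1 ->
  ln (h n) + x * ln (n - 1) <= ln (h (n + x)) <= ln (h n) + x * ln n.
Proof.
  intros hpos hsucc hLC n x Hn Hx. split.
  - assert (E1 : h n = (n - 1) * h (n - 1)).
    { rewrite <- hsucc by lra. f_equal. ring. }
    assert (L := hLC (n - 1) (n + x) (x / (1 + x)) ltac:(lra) ltac:(lra)).
    assert (Hl : 0 < x / (1 + x) < 1).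
    { split. apply Rdiv_lt_0_compat; lra. apply Rmult_lt_reg_r with (1 + x). lra.
      unfold Rdiv. rewrite Rmult_assoc, Rinv_l; lra. }
    specialize (L Hl).
    replace (x / (1 + x) * (n - 1) + (1 - x / (1 + x)) * (n + x)) with n in L by (field; lra).
    rewrite E1, ln_mult in L by (try apply hpos; lra).
    rewrite E1, ln_mult by (try apply hpos; lra).
    replace (1 - x / (1 + x)) with (/ (1 + x)) in L by (field; lra).
    replace (x / (1 + x)) with (x * / (1 + x)) in L by (unfold Rdiv; ring).
    assert (Hi : 0 < / (1 + x)) by (apply Rinv_0_lt_compat; lra).
    apply Rmult_le_reg_l with (/ (1 + x)); auto.
    assert (Hx1 : x * / (1 + x) = 1 - / (1 + x)) by (field; lra). rewrite Hx1 in L.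
    assert (Eg : / (1 + x) * (ln (n - 1) + ln (h (n - 1)) + x * ln (n - 1)) = ln (n - 1) + / (1 + x) * ln (h (n - 1))) by (field; lra).
    rewrite Eg. lra.
  - assert (L := hLC n (n + 1) (1 - x) ltac:(lra) ltac:(lra) ltac:(lra)).
    replace ((1 - x) * n + (1 - (1 - x)) * (n + 1)) with (n + x) in L by ring.
    rewrite hsucc, ln_mult in L by (try apply hpos; lra). lra.
Qed.

Lemma r_unit x : 0 < x <= 1 -> r x = r 1.
Proof.
  intros Hx. destruct (Req_dec x 1) as [->|Hne]; auto.
  assert (Hx' : 0 < x < 1) by lra.
  assert (K : forall k : nat, Rabs (r x - r 1) <= / (INR k + 1)).
  { intros k. set (n := INR k + 2).
    assert (Hn : 1 < n) by (unfold n; pose proof (pos_INR k); lra).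
    assert (E1 : r (n + x) = r x).
    { replace (n + x) with (x + INR (S (S k))) by (rewrite !S_INR; unfold n; ring). apply r_per_n; lra. }
    assert (E2 : r n = r 1).
    { replace n with (1 + INR (S k)) by (rewrite S_INR; unfold n; ring). apply r_per_n; lra. }
    destruct (bounds f fpos fsucc fLC n x Hn Hx') as [F1 F2].
    destruct (bounds g gpos gsucc gLC n x Hn Hx') as [G1 G2].
    assert (D : Rabs (r x - r 1) <= x * (ln n - ln (n - 1))).
    { rewrite <- E1, <- E2. unfold r. apply Rabs_le. split; nra. }
    assert (Hd : 0 <= ln n - ln (n - 1)).
    { assert (ln (n - 1) < ln n) by (apply ln_increasing; lra). lra. }
    assert (D2 : ln n - ln (n - 1) <= / (INR k + 1)).
    { rewrite <- ln_div by lra. eapply Rle_trans. apply ln_le_sub1. apply Rdiv_lt_0_compat; lra.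
      right. unfold n. field. pose proof (pos_INR k). lra. }
    nra. }
  apply NNPP. intro Hn.
  assert (Hd : 0 < Rabs (r x - r 1)) by (apply Rabs_pos_lt; lra).
  destruct (nat_big _ Hd) as [k Hk].
  specialize (K k).
  assert (0 < INR k + 1) by (pose proof (pos_INR k); lra).
  assert (/ (INR k + 1) < Rabs (r x - r 1)).
  { rewrite <- (Rinv_inv (Rabs (r x - r 1))). apply Rinv_lt_contravar.
    apply Rmult_lt_0_compat; auto. apply Rinv_0_lt_compat; auto. lra. }
  lra.
Qed.

Lemma r_all x : 0 < x -> r x = r 1.
Proof.
  intros Hx.
  assert (A : forall N : nat, forall y, 0 < y <= INR N + 1 -> r y = r 1).
  { induction N; intros y Hy.
    - simpl in Hy. apply r_unit; lra.
    - rewrite S_INR in Hy. destruct (Rle_dec y (INR N + 1)).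
      + apply IHN; lra.
      + replace y with ((y - 1) + 1) by ring. rewrite r_per by (pose proof (pos_INR N); lra).
        apply IHN. pose proof (pos_INR N); lra. }
  destruct (nat_big (/ x)) as [N HN]. apply Rinv_0_lt_compat; auto.
  rewrite Rinv_inv in HN. apply (A N). lra.
Qed.

Theorem BM x : 0 < x -> f x * g 1 = g x * f 1.
Proof.
  intros Hx. assert (H := r_all x Hx). unfold r in H.
  apply ln_inv. apply Rmult_lt_0_compat; [apply fpos|apply gpos]; lra. apply Rmult_lt_0_compat; [apply gpos|apply fpos]; lra.
  rewrite !ln_mult; try (first [apply fpos | apply gpos]; lra). lra.
Qed.
End BM.


Theorem beta_gamma a b : 0 < a -> 0 < b -> Bv a b * Gamma_fn (a + b) = Gamma_fn a * Gamma_fn b.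
Proof.
  intros Ha Hb.
  set (f := fun x => Bv x b * Gamma_fn (x + b)).
  assert (fpos : forall x, 0 < x -> 0 < f x).
  { intros x Hx. unfold f. apply Rmult_lt_0_compat. apply B_pos; auto. apply Gamma_pos; lra. }
  assert (fsucc : forall x, 0 < x -> f (x + 1) = x * f x).
  { intros x Hx. unfold f. replace (x + 1 + b) with ((x + b) + 1) by ring.
    rewrite Gamma_succ by lra. rewrite <- Rmult_assoc, (Rmult_comm (Bv (x+1) b)), B_succ by auto. ring. }
  assert (fLC : LC f).
  { intros x z la Hx Hz Hla. unfold f.
    rewrite !ln_mult by (first [apply B_pos | apply Gamma_pos]; nra).
    assert (H1 := B_LC b Hb x z la Hx Hz Hla).
    assert (H2 := Gamma_LC (x + b) (z + b) la ltac:(lra) ltac:(lra) Hla).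
    replace (la * (x + b) + (1 - la) * (z + b)) with (la * x + (1 - la) * z + b) in H2 by ring.
    simpl in H1. lra. }
  assert (H := BM f Gamma_fn fpos Gamma_pos fsucc Gamma_succ fLC Gamma_LC a Ha).
  unfold f in H. rewrite Gamma_1, B_1, (Rplus_comm 1 b), Gamma_succ in H by auto.
  rewrite Rmult_1_r in H. rewrite H. field. lra.
Qed.


Lemma cnt_ext f g (lo : R) (hi : Rbar) : (forall y, ins lo hi y -> g y = f y) -> Cnt g lo hi -> Cnt f lo hi.
Proof.
  intros He Hc x Hx. apply continuous_ext_loc with g.
  apply locally_interval with lo hi. apply Hx. apply Hx.
  intros y H1 H2. apply He. split; auto.
  apply Hc; auto.
Qed.

Lemma conv_val beta a b Iv Iw U : 0 < beta -> 0 < a -> 0 < b -> Iv + Iw < U ->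
  Rint_open (fun t => gamma_dens beta a Iv t * gamma_dens beta b Iw (U - t)) Iv (U - Iw)
  = Rpower beta (a + b) * exp (- beta * (U - Iv - Iw)) * Rpower (U - Iv - Iw) (a + b - 1) / Gamma_fn (a + b).
Proof.
  intros Hbe Ha Hb HU.
  set (L := U - Iv - Iw). assert (HL : 0 < L) by (unfold L; lra).
  set (k := fun t => bi a b ((t - Iv) / L)).
  set (c := Rpower beta a / Gamma_fn a * (Rpower beta b / Gamma_fn b) * exp (- beta * L) * Rpower L (a + b - 2)).
  set (g := fun t => gamma_dens beta a Iv t * gamma_dens beta b Iw (U - t)).
  assert (Hk : Cnt k Iv (Finite (U - Iw))).
  { intros t [Ht Ht']; simpl in Ht'. unfold k, bi. apply dcont. auto_derive.
    split. apply Rdiv_lt_0_compat; lra. split; auto.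
    apply Rlt_Rminus. apply Rmult_lt_reg_r with L; auto. unfold Rdiv; rewrite Rmult_assoc, Rinv_l; unfold L in *; lra. }
  assert (Hg : forall t, ins Iv (Finite (U - Iw)) t -> c * k t + 0 * k t = g t).
  { intros t [Ht Ht']; simpl in Ht'. unfold g, gamma_dens, k, c, bi.
    destruct (Rlt_dec Iv t); [|lra]. destruct (Rlt_dec Iw (U - t)); [|lra].
    assert (E1 : ln ((t - Iv) / L) = ln (t - Iv) - ln L) by (apply ln_div; lra).
    assert (E2 : ln (1 - (t - Iv) / L) = ln (U - t - Iw) - ln L).
    { rewrite <- ln_div by lra. f_equal. unfold L. field. lra. }
    rewrite E1, E2. unfold Rpower.
    replace (- beta * L) with (- beta * (t - Iv) + - beta * (U - t - Iw)) by (unfold L; ring).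
    rewrite !exp_plus.
    assert (F1 : exp ((a - 1) * (ln (t - Iv) - ln L)) = exp ((a - 1) * ln (t - Iv)) * / exp ((a - 1) * ln L))
      by (rewrite <- exp_Ropp, <- exp_plus; f_equal; ring).
    assert (F2 : exp ((b - 1) * (ln (U - t - Iw) - ln L)) = exp ((b - 1) * ln (U - t - Iw)) * / exp ((b - 1) * ln L))
      by (rewrite <- exp_Ropp, <- exp_plus; f_equal; ring).
    assert (F3 : exp ((a + b - 2) * ln L) = exp ((a - 1) * ln L) * exp ((b - 1) * ln L))
      by (rewrite <- exp_plus; f_equal; ring).
    rewrite F1, F2, F3.
    assert (0 < exp ((a - 1) * ln L)) by apply exp_pos.
    assert (0 < exp ((b - 1) * ln L)) by apply exp_pos.
    assert (0 < Gamma_fn a) by (apply Gamma_pos; auto).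
    assert (0 < Gamma_fn b) by (apply Gamma_pos; auto).
    field. repeat split; lra. }
  assert (Hlim : Lim g Iv (Finite (U - Iw)) (c * (L * Bv a b) + 0 * (L * Bv a b))).
  { apply Lim_ext with (1 := Hg). apply Lim_lin; auto.
    replace (U - Iw) with (Iv + L) by (unfold L; ring).
    apply Lim_sub. apply bi_cnt. apply Bv_lim; auto. auto.
    replace (U - Iw) with (Iv + L) by (unfold L; ring).
    apply Lim_sub. apply bi_cnt. apply Bv_lim; auto. auto. }
  rewrite (Rint_open_val g Iv (U - Iw) (c * (L * Bv a b) + 0 * (L * Bv a b))); auto.
  2: { apply cnt_ext with (fun t => c * k t + 0 * k t). intros; apply Hg; auto.
       intros x Hx. apply (continuous_plus (V:=R_NormedModule)).
       apply (continuous_scal_r (V:=R_NormedModule) c k). apply Hk; auto.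
       apply (continuous_scal_r (V:=R_NormedModule) 0 k). apply Hk; auto. }
  assert (BG := beta_gamma a b Ha Hb).
  assert (0 < Gamma_fn a) by (apply Gamma_pos; auto).
  assert (0 < Gamma_fn b) by (apply Gamma_pos; auto).
  assert (0 < Gamma_fn (a + b)) by (apply Gamma_pos; lra).
  assert (Bv a b = Gamma_fn a * Gamma_fn b / Gamma_fn (a + b)) by (rewrite <- BG; field; lra).
  rewrite H2. unfold c. fold L.
  replace (a + b - 1) with ((a + b - 2) + 1) by ring.
  rewrite (Rpower_plus (a + b - 2) 1 L), Rpower_1, (Rpower_plus a b beta) by auto.
  field. repeat split; lra.
Qed.


Lemma pif {T : Type} beta (I nu p : T -> R) v U : 0 < beta -> I v < U ->
  pi_w beta I nu p v * f_type beta I nu v U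
  = p v * exp (- beta * U) * Rpower (U - I v) (nu v - 1) / Gamma_fn (nu v).
Proof.
  intros Hb HU. unfold pi_w, f_type, gamma_dens. destruct (Rlt_dec (I v) U); [|lra].
  assert (X1 : exp (- beta * I v) * exp (- beta * (U - I v)) = exp (- beta * U))
    by (rewrite <- exp_plus; f_equal; ring).
  assert (X2 : Rpower beta (- nu v) * Rpower beta (nu v) = 1)
    by (rewrite <- Rpower_plus; replace (- nu v + nu v) with 0 by ring; apply Rpower_O; auto).
  transitivity (p v * (exp (- beta * I v) * exp (- beta * (U - I v))) * (Rpower beta (- nu v) * Rpower beta (nu v))
     * Rpower (U - I v) (nu v - 1) / Gamma_fn (nu v)).
  unfold Rdiv; ring. rewrite X1, X2. unfold Rdiv; ring.
Qed.

Lemma pipf {T : Type} beta (I nu p : T -> R) v w U : 0 < beta -> (forall x, 0 < nu x) ->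
  I_pair I (v, w) < U ->
  pi_w beta I nu p v * pi_w beta I nu p w * f_pair beta I nu (v, w) U
  = p v * p w * exp (- beta * U) * Rpower (U - I_pair I (v, w)) (nu_pair nu (v, w) - 1)
     / Gamma_fn (nu_pair nu (v, w)).
Proof.
  intros Hb Hnu HU. unfold f_pair. destruct (Rlt_dec (I_pair I (v, w)) U); [|lra].
  unfold I_pair, nu_pair in *; simpl in *. unfold f_type.
  rewrite conv_val by auto.
  unfold pi_w.
  assert (X1 : exp (- beta * I v) * exp (- beta * I w) * exp (- beta * (U - I v - I w)) = exp (- beta * U))
    by (rewrite <- !exp_plus; f_equal; ring).
  assert (X2 : Rpower beta (- nu v) * Rpower beta (- nu w) * Rpower beta (nu v + nu w) = 1)
    by (rewrite <- !Rpower_plus; replace (- nu v + - nu w + (nu v + nu w)) with 0 by ring; apply Rpower_O; auto).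
  replace (U - (I v + I w)) with (U - I v - I w) by ring.
  transitivity (p v * p w * (exp (- beta * I v) * exp (- beta * I w) * exp (- beta * (U - I v - I w)))
     * (Rpower beta (- nu v) * Rpower beta (- nu w) * Rpower beta (nu v + nu w))
     * Rpower (U - I v - I w) (nu v + nu w - 1) / Gamma_fn (nu v + nu w)).
  unfold Rdiv; ring. rewrite X1, X2. unfold Rdiv; ring.
Qed.

Theorem theorem8
  (V : nat) (cls : Fin.t V -> nat)
  (I nu p : Fin.t V -> R) (beta : R)
  (bu : Fin.t V -> Fin.t V -> R)
  (bb : Fin.t V * Fin.t V -> Fin.t V * Fin.t V -> R)
  (Hbeta : 0 < beta)
  (Hnu : forall v, 0 < nu v)
  (Hnu_cls : forall v w, cls v = cls w -> nu v = nu w)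
  (Hp : forall v, 0 < p v)
  (Hbin : forall v w v' w',
      p v * p w * bb (v, w) (v', w') = p v' * p w' * bb (v', w') (v, w))
  (Hun_cls : forall v w, cls v <> cls w -> bu v w = 0)
  (Hun : forall v w, cls v = cls w -> p v * bu v w = p w * bu w v)
  (Hnu_bin : forall v w v' w', bb (v, w) (v', w') <> 0 ->
      nu v + nu w = nu v' + nu w') :
  (forall v w v' w' U, bb (v, w) (v', w') <> 0 ->
      Rmax (I_pair I (v, w)) (I_pair I (v', w')) < U ->
      pi_w beta I nu p v * pi_w beta I nu p w * f_pair beta I nu (v, w) U
        * a_bin I nu bb (v, w) (v', w') U
      = pi_w beta I nu p v' * pi_w beta I nu p w' * f_pair beta I nu (v', w') U
        * a_bin I nu bb (v', w') (v, w) U)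
  /\
  (forall v w U, cls v = cls w ->
      Rmax (I v) (I w) < U ->
      pi_w beta I nu p v * f_type beta I nu v U * a_un I nu bu v w U
      = pi_w beta I nu p w * f_type beta I nu w U * a_un I nu bu w v U).
Proof.
  split.
  - intros v w v' w' U Hbb HU.
    pose proof (Rmax_l (I_pair I (v, w)) (I_pair I (v', w'))).
    pose proof (Rmax_r (I_pair I (v, w)) (I_pair I (v', w'))).
    rewrite (pipf beta I nu p v w U), (pipf beta I nu p v' w' U) by (auto; lra).
    unfold a_bin. destruct (Rle_dec (I_pair I (v', w')) U); [|lra].
    destruct (Rle_dec (I_pair I (v, w)) U); [|lra].
    assert (En : nu_pair nu (v, w) = nu_pair nu (v', w')) by (unfold nu_pair; simpl; auto).
    rewrite <- En.
    transitivity ((p v * p w * bb (v, w) (v', w')) * exp (- beta * U)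
      * Rpower (U - I_pair I (v, w)) (nu_pair nu (v, w) - 1)
      * Rpower (U - I_pair I (v', w')) (nu_pair nu (v, w) - 1) / Gamma_fn (nu_pair nu (v, w))).
    unfold Rdiv; ring. rewrite Hbin. unfold Rdiv; ring.
  - intros v w U Hc HU.
    pose proof (Rmax_l (I v) (I w)). pose proof (Rmax_r (I v) (I w)).
    rewrite (pif beta I nu p v U), (pif beta I nu p w U) by (auto; lra).
    unfold a_un. destruct (Rle_dec (I w) U); [|lra]. destruct (Rle_dec (I v) U); [|lra].
    rewrite (Hnu_cls v w Hc).
    transitivity ((p v * bu v w) * exp (- beta * U) * Rpower (U - I v) (nu w - 1)
      * Rpower (U - I w) (nu w - 1) / Gamma_fn (nu w)).
    unfold Rdiv; ring. rewrite Hun by auto. unfold Rdiv; ring.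
Qed.
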